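(* Let $m\ge3$, $C$ a set of $m$ candidates, $T$ the set of all $m!$ strict rankings of $C$, $w=(w_1,\dots,w_m)$ with $1=w_1\ge\cdots\ge w_m=0$, $\bar w=(w_1+\cdots+w_m)/m$, and $\sigma_t(\alpha)=w_i$ where $i$ is the position of $\alpha$ in $t\in T$. Let $(N_t)_{t\in T}$ be nonnegative integers with $\sum_tN_t=n$ and $|\alpha|=\sum_tN_t\sigma_t(\alpha)$. Suppose $|a|>|\alpha|$ for all $\alpha\ne a$, and $b\ne a$ satisfies $|b|\ge|\alpha|$ for all $\alpha\ne a$. Let $T_b$ be the set of types ranking $b$ first, $T_i$ ($1\le i\le m-1$) the set of types ranking $b$ in position $i$ and $a$ in position $i+1$, and $T_{ba}=\bigcup_iT_i$. Then the linear program $$\min\sum_{t\in T_{ba}}x_t\ \text{ s.t. }\ \sum_{t\in T_b}y_t(1-\sigma_t(\alpha))-\sum_{t\in T_{ba}}x_t(\sigma_t(b)-\sigma_t(\alpha))\ge|\alpha|-|b|\ \forall\alpha\ne b,\quad \sum_{t\in T_b}y_t=\sum_{t\in T_{ba}}x_t,\quad x_t\ge0,\ y_t\ge0$$ has the same optimal value (with the value $+\infty$ for an infeasible program) as the linear program $$\min\sum_{i=1}^{m-1}z_i\ \text{ s.t. }\ \sum_{i=1}^{m-1}(1-w_i+w_{i+1})z_i\ge|a|-|b|,\quad \sum_{i=1}^{m-1}(1-w_i)z_i\ge n\bar w-|b|,\quad z_i\ge0\ (i=1,\dots,m-1).$$ *)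

(* Defs.v *)
From HB Require Import structures.
From mathcomp Require Import all_boot all_order all_algebra all_fingroup.
From mathcomp Require Import all_classical all_reals ereal.
Set Implicit Arguments. Unset Strict Implicit. Unset Printing Implicit Defensive.
Import Order.TTheory GRing.Theory Num.Theory.
Local Open Scope ring_scope.
Local Open Scope classical_set_scope.

(* Conventions:
   - candidates are 'I_m; a ranking (type) t : {perm 'I_m} sends candidate
     alpha to its 0-based position t alpha (paper position = t alpha + 1);
   - the weight vector is w : nat -> R, with w i the paper's w_{i+1};
     only the values w 0, ..., w (m-1) are ever used. *)

Section Voting.
Variables (R : realType) (m : nat).

Definition wvalid (w : nat -> R) : Prop :=
  [/\ w 0%N = 1, w m.-1 = 0 & forall i : nat, (i.+1 < m)%N -> w i.+1 <= w i].

Definition sigma (w : nat -> R) (t : {perm 'I_m}) (alpha : 'I_m) : R :=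
  w (t alpha : nat).

Definition score (w : nat -> R) (N : {perm 'I_m} -> nat) (alpha : 'I_m) : R :=
  \sum_(t : {perm 'I_m}) (N t)%:R * sigma w t alpha.

Definition inTb (b : 'I_m) (t : {perm 'I_m}) : bool := (t b == 0 :> nat).

Definition inTba (a b : 'I_m) (t : {perm 'I_m}) : bool :=
  (t a == (t b).+1 :> nat).

Definition LP1_feasible (w : nat -> R) (N : {perm 'I_m} -> nat) (a b : 'I_m)
    (x y : {perm 'I_m} -> R) : Prop :=
  [/\ forall alpha : 'I_m, alpha != b ->
        \sum_(t | inTb b t) y t * (1 - sigma w t alpha)
        - \sum_(t | inTba a b t) x t * (sigma w t b - sigma w t alpha)
        >= score w N alpha - score w N b,
      \sum_(t | inTb b t) y t = \sum_(t | inTba a b t) x t,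
      forall t, 0 <= x t
    & forall t, 0 <= y t].

(* optimal value (infimum, +oo if infeasible) of the first LP *)
Definition LP1_value (w : nat -> R) (N : {perm 'I_m} -> nat) (a b : 'I_m)
    : \bar R :=
  ereal_inf [set r%:E | r in
    [set r : R | exists x y, LP1_feasible w N a b x y /\
                             r = \sum_(t | inTba a b t) x t]].

Definition nat_total (N : {perm 'I_m} -> nat) : nat := \sum_(t : {perm 'I_m}) N t.

Definition wbar (w : nat -> R) : R := (\sum_(i < m) w i) / m%:R.

Definition LP2_feasible (w : nat -> R) (N : {perm 'I_m} -> nat) (a b : 'I_m)
    (z : 'I_m.-1 -> R) : Prop :=
  [/\ \sum_(i < m.-1) (1 - w i + w i.+1) * z i >= score w N a - score w N b,
      \sum_(i < m.-1) (1 - w i) * z i >= (nat_total N)%:R * wbar w - score w N b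
    & forall i, 0 <= z i].

Definition LP2_value (w : nat -> R) (N : {perm 'I_m} -> nat) (a b : 'I_m)
    : \bar R :=
  ereal_inf [set r%:E | r in
    [set r : R | exists z, LP2_feasible w N a b z /\ r = \sum_(i < m.-1) z i]].

End Voting.

(* Main.v *)
Require Import Defs.
From HB Require Import structures.
From mathcomp Require Import all_boot all_order all_algebra all_fingroup.
From mathcomp Require Import all_classical all_reals ereal.
From mathcomp Require Import ring lra.
From Stdlib Require Import Lia.
From mathcomp Require Import zify.
Import Order.TTheory GRing.Theory Num.Theory.
Set Implicit Arguments. Unset Strict Implicit. Unset Printing Implicit Defensive.
Local Open Scope ring_scope.
Section Perms.
Variable n : nat.

Lemma tpermV (x y z : 'I_n.+1) :
  nat_of_ord (tperm x y z) = if (z : nat) == x then (y : nat) else if (z : nat) == y then (x : nat) else z.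
Proof.
case: tpermP => [->|->|/eqP hx /eqP hy]; rewrite ?eqxx //.
  by case: eqP => // /val_inj ->.
by rewrite !val_eqE (negbTE hx) (negbTE hy).
Qed.

Definition rhof (i : nat) (p : 'I_n.+1) : 'I_n.+1 :=
  inord (if (p : nat) == 0%N then i else if (p <= i)%N then p.-1 else p).

Lemma rhofV i (hi : (i < n)%N) p :
  nat_of_ord (rhof i p) = if (p : nat) == 0%N then i else if (p <= i)%N then p.-1 else p.
Proof.
rewrite /rhof inordK //; have := ltn_ord p.
by case: ifP => _; [lia|case: ifP => _; lia].
Qed.

Lemma rhof_inj i (hi : (i < n)%N) : injective (rhof i).
Proof.
move=> p q /(congr1 (@nat_of_ord _)); rewrite !rhofV // => h; apply: val_inj => /=.
move: h; case: eqP => hp; case: eqP => hq; try case: ifP => h1; try case: ifP => h2; lia.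
Qed.

Definition rho i (hi : (i < n)%N) : {perm 'I_n.+1} := perm (rhof_inj hi).

Lemma rhoV i (hi : (i < n)%N) p :
  nat_of_ord (rho hi p) = if (p : nat) == 0%N then i else if (p <= i)%N then p.-1 else p.
Proof. by rewrite /rho permE rhofV. Qed.

Lemma perm2 (c1 c2 p1 p2 : 'I_n.+1) : c1 != c2 -> p1 != p2 ->
  exists u : {perm 'I_n.+1}, u c1 = p1 /\ u c2 = p2.
Proof.
move=> hc hp; pose u1 := tperm c1 p1.
exists (u1 * tperm (u1 c2) p2)%g; rewrite !permM tpermL; split; last by rewrite tpermL.
rewrite tpermD //; last by rewrite eq_sym.
apply: contra hc => /eqP h; apply/eqP; apply: (@perm_inj _ u1); by rewrite h /u1 tpermL.
Qed.

Lemma perm3 (c1 c2 c3 p1 p2 p3 : 'I_n.+1) : c1 != c2 -> c3 != c1 -> c3 != c2 -> p1 != p2 ->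
  exists u : {perm 'I_n.+1}, [/\ u c1 = p1, u c2 = p2 & (p3 != p1 -> p3 != p2 -> u c3 = p3)].
Proof.
move=> hc h31 h32 hp; have [u [e1 e2]] := perm2 hc hp.
case: (boolP ((p3 != p1) && (p3 != p2))) => [/andP[h1 h2]|hn]; last first.
  by exists u; split=> // h1 h2; move: hn; rewrite h1 h2.
exists (u * tperm (u c3) p3)%g; rewrite !permM tpermL; split=> //.
- rewrite e1 tpermD // ?(eq_sym p3) //; rewrite -e1; apply: contra h31 => /eqP /perm_inj ->; by [].
- rewrite e2 tpermD // ?(eq_sym p3) //; rewrite -e2; apply: contra h32 => /eqP /perm_inj ->; by [].
Qed.
End Perms.
Section Farkas.
Variable R : realFieldType.

Definition trf (I : finType) (a : I -> R) (g : I -> R) (k : I + (I * I)) : R :=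
  match k with
  | inl i => (a i == 0)%:R * g i
  | inr pq => ((0 < a pq.1) && (a pq.2 < 0))%:R * (- a pq.2 * g pq.1 + a pq.1 * g pq.2)
  end.

Definition trb (I : finType) (a : I -> R) (y : I + (I * I) -> R) (i : I) : R :=
  (a i == 0)%:R * y (inl i)
  + \sum_q ((0 < a i) && (a q < 0))%:R * y (inr (i, q)) * (- a q)
  + \sum_p ((0 < a p) && (a i < 0))%:R * y (inr (p, i)) * a p.

Lemma trbE (I : finType) (a : I -> R) (y : I + (I * I) -> R) (g : I -> R) :
  \sum_i trb a y i * g i = \sum_k y k * trf a g k.
Proof.
rewrite big_sumType /=.
rewrite (eq_bigr (fun pq => y (inr (pq.1,pq.2)) * trf a g (inr (pq.1, pq.2)))); last by case.
rewrite -(pair_bigA _ (fun p q => y (inr (p, q)) * trf a g (inr (p, q)))) /=.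
set T1 := fun p q => ((0 < a p) && (a q < 0))%:R * y (inr (p, q)) * (- a q) * g p.
set T2 := fun p q => ((0 < a p) && (a q < 0))%:R * y (inr (p, q)) * a p * g q.
have H : forall p q, y (inr (p, q)) *
   (((0 < a p) && (a q < 0))%:R * (- a q * g p + a p * g q)) = T1 p q + T2 p q.
  by move=> p q; rewrite /T1 /T2; ring.
under [X in _ = _ + X]eq_bigr do under eq_bigr do rewrite H.
under [X in _ = _ + X]eq_bigr do rewrite big_split /=.
rewrite big_split /= addrA.
under eq_bigr do rewrite !mulrDl.
rewrite !big_split /=.
congr (_ + _ + _).
- by apply: eq_bigr => i _; ring.
- by apply: eq_bigr => p _; rewrite mulr_suml.
rewrite [RHS]exchange_big /=; apply: eq_bigr => q _; rewrite mulr_suml.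
done.
Qed.
End Farkas.
Section Farkas2.
Variable R : realFieldType.

Lemma exists_between (I : finType) (P Q : pred I) (L U : I -> R) :
  (forall p q, P p -> Q q -> L p <= U q) ->
  exists x, (forall p, P p -> L p <= x) /\ (forall q, Q q -> x <= U q).
Proof.
move=> H; case: (pickP P) => [p0 Pp0 | none].
  exists (L [arg max_(p > p0 | P p) L p]%O).
  case: arg_maxP => // i Pi Hmax; split => [p Pp|q Qq]; first exact: Hmax.
  exact: H.
exists (- \sum_q `|U q|); split => [p|q Qq]; first by rewrite none.
rewrite (bigD1 q) //= opprD.
have h1 : 0 <= \sum_(j | j != q) `|U j| by apply: sumr_ge0.
have := lexx `|U q|; rewrite ler_norml => /andP[h2 _].
lra.
Qed.

Lemma div_pair (u v ap aq : R) : 0 < ap -> aq < 0 ->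
  - aq * u + ap * v <= 0 -> u / ap <= v / aq.
Proof.
move=> hp hq h; rewrite ler_pdivrMr // mulrAC ler_ndivlMr //; lra.
Qed.

Lemma trf_lin (I : finType) n (a : I -> R) (G : 'I_n -> I -> R) (x : 'I_n -> R) k :
  \sum_j trf a (G j) k * x j = trf a (fun i => \sum_j G j i * x j) k.
Proof.
case: k => [i|[p q]] /=.
  by rewrite mulr_sumr; apply: eq_bigr => j _; ring.
rewrite !mulr_sumr -big_split mulr_sumr; apply: eq_bigr => j _ /=; ring.
Qed.

Lemma farkas n : forall (I : finType) (A : I -> 'I_n -> R) (b : I -> R),
  (exists x : 'I_n -> R, forall i, b i <= \sum_j A i j * x j) \/
  (exists y : I -> R, (forall i, 0 <= y i) /\ (forall j, \sum_i y i * A i j = 0)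
                      /\ 0 < \sum_i y i * b i).
Proof.
elim: n => [|n IH] I A b.
  case: (boolP [exists i, 0 < b i]) => [/existsP [i0 Hi0] | /existsPn H].
    right; exists (fun i => (i == i0)%:R); split => [i|]; first by rewrite ler0n.
    split => [[j //]|].
    rewrite (bigD1 i0) //= eqxx mul1r big1 ?addr0 // => i /negbTE ->; by rewrite mul0r.
  left; exists (fun _ => 0) => i; rewrite big_ord0.
  by have := H i; rewrite -leNgt.
pose a i := A i ord_max.
pose A' k (j : 'I_n) := trf a (fun i => A i (widen_ord (leqnSn n) j)) k.
pose b' := trf a b.
case: (IH _ A' b') => [[x' Hx'] | [y' [Hy0 [HyA Hyb]]]].
- left.
  pose s i := \sum_j A i (widen_ord (leqnSn n) j) * x' j.
  have Hs k : b' k <= trf a s k.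
    by rewrite (le_trans (Hx' k)) // /A' trf_lin.
  pose L p := (b p - s p) / a p.
  pose U q := (b q - s q) / a q.
  have [xn [HL HU]] : exists xn, (forall p, 0 < a p -> L p <= xn) /\
                                 (forall q, a q < 0 -> xn <= U q).
    apply: exists_between => p q Pp Qq.
    have := Hs (inr (p, q)); rewrite /b' /= Pp Qq /= mul1r.
    move=> h; apply: div_pair => //; lra.
  exists (fun j => if insub (val j) is Some j' then x' j' else xn) => i.
  rewrite big_ord_recr /= insubF ?ltnn //.
  under eq_bigr do rewrite valK.
  rewrite -/(s i).
  have [ai0|ai0|ai0] := ltrgtP (a i) 0.
  + have := HU i ai0; rewrite /U ler_ndivlMr // -/(a i); lra.
  + have := HL i ai0; rewrite /L ler_pdivrMr // -/(a i); lra.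
  + have := Hs (inl i); rewrite /b' /= ai0 eqxx !mul1r -/(a i) ai0 mul0r addr0.
    done.
- right; exists (trb a y'); split.
    move=> i; rewrite /trb; apply: addr_ge0; first apply: addr_ge0.
    + by apply: mulr_ge0; [rewrite ler0n|apply: Hy0].
    + apply: sumr_ge0 => q _; have [hq|hq] := ltrP (a q) 0; last by rewrite andbF mulr0n !mul0r.
      by rewrite -mulrA mulr_ge0 ?ler0n // mulr_ge0 // oppr_ge0 ltW.
    + apply: sumr_ge0 => p _; have [hp|hp] := ltrP 0 (a p); last by rewrite mulr0n !mul0r.
      by rewrite -mulrA mulr_ge0 ?ler0n // mulr_ge0 // ltW.
  split => [j|]; last by rewrite trbE.
  rewrite (trbE a y' (fun i => A i j)).
  case: (unliftP ord_max j) => [j'|] ->.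
    rewrite -[RHS](HyA j'); apply: eq_bigr => k _; congr (_ * _).
    by rewrite /A'; congr trf; apply/funext => i; congr A; apply: val_inj; rewrite /= /bump leqNgt ltn_ord.
  apply: big1 => -[i|[p q]] _ /=; rewrite -/(a _) -?/(a p) -?/(a q).
    by case: eqP => [->|_]; rewrite ?mulr0n ?mul0r ?mulr0.
  by rewrite (mulrC (a p)) mulNr addNr !mulr0.
Qed.
End Farkas2.
Section Farkas3.
Variable R : realFieldType.

Lemma sum_enum (J : finType) (F : J -> R) :
  \sum_j F j = \sum_(l < #|J|) F (enum_val l).
Proof.
rewrite (reindex (@enum_val J (pred_of_simpl predT))) //=; apply: onW_bij; apply: enum_val_bij.
Qed.

Lemma sum_ind (J : finType) (j : J) (G : 'I_#|J| -> R) :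
  \sum_(l < #|J|) (enum_val l == j)%:R * G l = G (enum_rank j).
Proof.
rewrite (bigD1 (enum_rank j)) //= enum_rankK eqxx mul1r big1 ?addr0 //.
move=> l hl; case: eqP => [e|_]; last by rewrite mulr0n mul0r.
by move: hl; rewrite -e enum_valK eqxx.
Qed.

Lemma farkas_nn (I J : finType) (A : I -> J -> R) (b : I -> R) :
  (exists x : J -> R, (forall j, 0 <= x j) /\ forall i, b i <= \sum_j A i j * x j) \/
  (exists y : I -> R, (forall i, 0 <= y i) /\ (forall j, \sum_i y i * A i j <= 0)
                      /\ 0 < \sum_i y i * b i).
Proof.
pose A' (k : I + J) (l : 'I_#|J|) : R :=
  match k with inl i => A i (enum_val l) | inr j => (enum_val l == j)%:R end.
pose b' (k : I + J) : R := match k with inl i => b i | inr _ => 0 end.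
case: (farkas A' b') => [[x' H]|[y' [Hy0 [HyA Hyb]]]].
  left; exists (fun j => x' (enum_rank j)); split.
    by move=> j; have := H (inr j); rewrite /A' /b' sum_ind.
  move=> i; have := H (inl i); rewrite /A' /b' => h; rewrite sum_enum.
  by under eq_bigr do rewrite enum_valK.
right; exists (fun i => y' (inl i)); split; first by move=> i; apply: Hy0.
split.
  move=> j; have := HyA (enum_rank j); rewrite big_sumType /= enum_rankK.
  have -> : \sum_i y' (inr i) * (j == i)%:R = y' (inr j).
    rewrite (bigD1 j) //= eqxx mulr1 big1 ?addr0 // => i /negbTE.
    by rewrite eq_sym => ->; rewrite mulr0.
  have := Hy0 (inr j); lra.
move: Hyb; rewrite big_sumType /= [X in _ + X]big1 ?addr0 // => j _; by rewrite mulr0.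
Qed.
End Farkas3.
Section Main.
Variables (R : realType) (n : nat) (w : nat -> R) (N : {perm 'I_n.+1} -> nat)
  (a b : 'I_n.+1).
Hypothesis Hw : wvalid n.+1 w.
Hypothesis Hab : b != a.

Lemma w0 : w 0 = 1. Proof. by case: Hw. Qed.
Lemma wn : w n = 0. Proof. by case: Hw. Qed.
Lemma wstep i : (i < n)%N -> w i.+1 <= w i.
Proof. by case: Hw => _ _ h hi; apply: h. Qed.
Lemma wmono i j : (i <= j)%N -> (j <= n)%N -> w j <= w i.
Proof.
move=> hij; rewrite -(subnKC hij).
elim: (j - i)%N => [|k IH] h; first by rewrite addn0.
have h1 : (i + k < n)%N by rewrite addnS in h.
apply: le_trans (IH (ltnW h1)); rewrite addnS; exact: wstep.
Qed.
Lemma wge0 i : (i <= n)%N -> 0 <= w i.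
Proof. by move=> h; rewrite -wn; apply: wmono. Qed.
Lemma wle1 i : (i <= n)%N -> w i <= 1.
Proof. by move=> h; rewrite -w0; apply: wmono. Qed.
Lemma wge0o (p : 'I_n.+1) : 0 <= w p.
Proof. by apply: wge0; rewrite -ltnS. Qed.
Lemma wle1o (p : 'I_n.+1) : w p <= 1.
Proof. by apply: wle1; rewrite -ltnS. Qed.

Definition S := \sum_(i < n.+1) w i.
Lemma sum_perm (t : {perm 'I_n.+1}) : \sum_al w (t al) = S.
Proof. by rewrite /S [RHS](reindex_inj (@perm_inj _ t)). Qed.

Definition score' al := score w N al.
Lemma sum_score : \sum_al score w N al = (nat_total N)%:R * S.
Proof.
rewrite /score exchange_big /= /nat_total natr_sum mulr_suml.
apply: eq_bigr => t _; rewrite -mulr_sumr; congr (_ * _).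
by rewrite -(sum_perm t).
Qed.

Definition zof (x : {perm 'I_n.+1} -> R) (i : 'I_n) : R :=
  \sum_(t | inTba a b t && (t b == i :> nat)) x t.

Lemma Tba_lt (t : {perm 'I_n.+1}) : inTba a b t -> (t b < n)%N.
Proof. by rewrite /inTba => /eqP h; have := ltn_ord (t a); rewrite h ltnS. Qed.

Lemma zpart (F : nat -> R) x :
  \sum_(i < n) F i * zof x i = \sum_(t | inTba a b t) F (t b) * x t.
Proof.
rewrite /zof; under eq_bigr do rewrite mulr_sumr big_mkcond /=.
rewrite exchange_big /= [RHS]big_mkcond /=; apply: eq_bigr => t _.
case: ifP => ht /=; last by rewrite big1 // => i _; rewrite andFb.
rewrite (bigD1 (Ordinal (Tba_lt ht))) //= eqxx /= big1 ?addr0 //.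
move=> i hi; case: eqP => // e; move: hi; suff -> : i = Ordinal (Tba_lt ht) by rewrite eqxx.
by apply: val_inj; rewrite /= e.
Qed.
Lemma LHSb x y : \sum_(t | inTb b t) y t * (1 - sigma w t b) -
    \sum_(t | inTba a b t) x t * (sigma w t b - sigma w t b) = 0.
Proof.
rewrite big1 ?sub0r; last by move=> t /eqP ht; rewrite /sigma ht w0 subrr mulr0.
by rewrite big1 ?oppr0 // => t _; rewrite subrr mulr0.
Qed.

Lemma sumLHS x y :
  \sum_al (\sum_(t | inTb b t) y t * (1 - sigma w t al) -
           \sum_(t | inTba a b t) x t * (sigma w t b - sigma w t al)) =
  (n.+1%:R - S) * \sum_(t | inTb b t) y t -
  (n.+1%:R * \sum_(t | inTba a b t) x t * w (t b) - S * \sum_(t | inTba a b t) x t).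
Proof.
rewrite sumrB exchange_big [X in _ - X]exchange_big /=; congr (_ - _).
  rewrite mulr_sumr; apply: eq_bigr => t _.
  rewrite -mulr_sumr sumrB sumr_const card_ord sum_perm /sigma; ring.
rewrite mulr_sumr mulr_sumr -sumrB; apply: eq_bigr => t _.
rewrite -mulr_sumr sumrB sumr_const card_ord /sigma sum_perm; ring.
Qed.

Lemma wbarE : wbar n.+1 w = S / n.+1%:R.
Proof. by []. Qed.

Lemma dir1 x y : LP1_feasible w N a b x y ->
  LP2_feasible w N a b (zof x) /\ \sum_(i < n) zof x i = \sum_(t | inTba a b t) x t.
Proof.
case=> Hrow Heq Hx Hy.
have Hz i : 0 <= zof x i by apply: sumr_ge0.
have Hsum : \sum_(i < n) zof x i = \sum_(t | inTba a b t) x t.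
  by have := zpart (fun _ => 1) x; under eq_bigr do rewrite mul1r; under [in RHS]eq_bigr do rewrite mul1r.
have Hba : a != b by rewrite eq_sym.
split=> //; split=> //=.
- rewrite (zpart (fun i => 1 - w i + w i.+1) x).
  have := Hrow a Hba.
  have h1 : \sum_(t | inTb b t) y t * (1 - sigma w t a) <= \sum_(t | inTb b t) y t.
    apply: ler_sum => t _; have := mulr_ge0 (Hy t) (wge0o (t a)); rewrite /sigma; lra.
  have h2 : \sum_(t | inTba a b t) (1 - w (t b) + w (t b).+1) * x t =
      \sum_(t | inTba a b t) x t - \sum_(t | inTba a b t) x t * (sigma w t b - sigma w t a).
    rewrite -sumrB; apply: eq_bigr => t /eqP ht; rewrite /sigma ht; ring.
  lra.
- rewrite (zpart (fun i => 1 - w i) x).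
  have Hall : \sum_al (score w N al - score w N b) <=
     \sum_al (\sum_(t | inTb b t) y t * (1 - sigma w t al) -
           \sum_(t | inTba a b t) x t * (sigma w t b - sigma w t al)).
    apply: ler_sum => al _; case: (eqVneq al b) => [->|hal]; last exact: Hrow.
    by rewrite LHSb subrr.
  rewrite sumLHS sumrB sum_score sumr_const card_ord Heq in Hall.
  have -> : \sum_(t | inTba a b t) (1 - w (t b)) * x t =
     \sum_(t | inTba a b t) x t - \sum_(t | inTba a b t) x t * w (t b).
    by rewrite -sumrB; apply: eq_bigr => t _; ring.
  rewrite wbarE.
  set X := \sum_(t | inTba a b t) x t in Hall *.
  set W := \sum_(t | inTba a b t) x t * w (t b) in Hall *.
  set sb := score w N b in Hall *.
  set nn := (nat_total N)%:R in Hall *.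
  have hm : 0 < n.+1%:R :> R by rewrite ltr0n.
  have -> : nn * (S / n.+1%:R) - sb = (nn * S - sb *+ n.+1) / n.+1%:R.
    by rewrite -mulr_natr; field; rewrite gt_eqF.
  rewrite ler_pdivrMr // -mulr_natr in Hall *.
  lra.
Qed.
Ltac iflia := repeat match goal with |- context [if ?c then _ else _] =>
  lazymatch c with context [if _ then _ else _] => fail | _ => let E := fresh "E" in destruct c eqn:E end end; lia.

Lemma perm_neq (u : {perm 'I_n.+1}) x y : x != y -> (u x : nat) != u y.
Proof. by apply: contra => /eqP /val_inj /perm_inj ->. Qed.

Lemma pair1 (s : 'I_n.+1) (i : 'I_n) : s != a -> s != b ->
  exists t u : {perm 'I_n.+1}, [/\ inTba a b t, inTb b u, (t b : nat) = i, (u a : nat) = n &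
    forall al, al != a -> al != b -> al != s -> ((t al < t b)%N \/ (t al : nat) = u al)].
Proof.
move=> hsa hsb; have hi : (i < n)%N := ltn_ord i.
have h0m : (ord0 : 'I_n.+1) != ord_max by rewrite -val_eqE /=; lia.
have [u [ub ua us]] := perm3 (lift ord0 i) Hab hsb hsa h0m.
have us' : (i.+1 != n)%N -> (u s : nat) = i.+1.
  move=> h; rewrite us //; rewrite -val_eqE /= /bump /=; lia.
exists (u * rho hi * tperm (lift ord0 i) ord_max)%g, u.
have tv al : nat_of_ord ((u * rho hi * tperm (lift ord0 i) ord_max)%g al) =
   let p := nat_of_ord (rho hi (u al)) in
   if p == i.+1 then n else if p == n then i.+1 else p.
  by rewrite !permM tpermV /= /bump /=.
have tb : nat_of_ord ((u * rho hi * tperm (lift ord0 i) ord_max)%g b) = i.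
  by rewrite tv /= rhoV ub /=; iflia.
split.
- rewrite /inTba tv tb /= rhoV ua /=; apply/eqP; iflia.
- by rewrite /inTb ub.
- exact: tb.
- by rewrite ua.
move=> al ha hb hs; rewrite tb tv /= rhoV.
have n0 : (u al : nat) != 0%N by have := perm_neq u hb; rewrite ub.
have nn : (u al : nat) != n by have := perm_neq u ha; rewrite ua.
have ns : (i.+1 != n)%N -> (u al : nat) != i.+1.
  by move=> h; have := perm_neq u hs; rewrite (us' h).
move: n0 nn ns; case: (u al) => p hp /= n0 nn ns.
iflia.
Qed.
Lemma pair2 (i : 'I_n) :
  exists t u : {perm 'I_n.+1}, [/\ inTba a b t, inTb b u, (t b : nat) = i &
    forall al, al != a -> al != b -> ((t al < t b)%N \/ (t al : nat) = u al)].
Proof.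
have hi : (i < n)%N := ltn_ord i.
have h0 : (ord0 : 'I_n.+1) != lift ord0 i by rewrite -val_eqE /= /bump /=; lia.
have [u [ub ua]] := perm2 Hab h0.
exists (u * rho hi)%g, u.
have tv al : nat_of_ord ((u * rho hi)%g al) = nat_of_ord (rho hi (u al)) by rewrite permM.
have tb : nat_of_ord ((u * rho hi)%g b) = i by rewrite tv rhoV ub.
split.
- rewrite /inTba tv tb rhoV ua /= /bump /=; apply/eqP; iflia.
- by rewrite /inTb ub.
- exact: tb.
move=> al ha hb; rewrite tb tv rhoV.
have n0 : (u al : nat) != 0%N by have := perm_neq u hb; rewrite ub.
have ni : (u al : nat) != i.+1 by have := perm_neq u ha; rewrite ua /= /bump /=.
move: n0 ni; case: (u al) => p hp /= n0 ni.
iflia.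
Qed.
Definition kapf (t u : {perm 'I_n.+1}) (al : 'I_n.+1) : R :=
  (1 - w (u al)) + (w (t al) - w (t b)).

Lemma kap_ge0 (t u : {perm 'I_n.+1}) al : ((t al < t b)%N \/ (t al : nat) = u al) -> 0 <= kapf t u al.
Proof.
rewrite /kapf => -[h|h].
  have h1 : w (t b) <= w (t al) by apply: wmono; [apply: ltnW|rewrite -ltnS].
  have := wle1o (u al); lra.
by rewrite -h; have := wle1o (t b); lra.
Qed.

Lemma kap_b (t u : {perm 'I_n.+1}) : inTb b u -> kapf t u b = 0.
Proof. by move/eqP=> h; rewrite /kapf h w0; ring. Qed.

Lemma sum_kap (t u : {perm 'I_n.+1}) : \sum_al kapf t u al = n.+1%:R * (1 - w (t b)).
Proof.
rewrite /kapf big_split /= !sumrB !sumr_const !card_ord !sum_perm.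
by ring.
Qed.

Lemma pair_ineq (lam : 'I_n.+1 -> R) (mu kap l : R) (t u : {perm 'I_n.+1}) :
  (forall t, inTba a b t -> \sum_al lam al * (w (t al) - w (t b)) - mu <= kap) ->
  (forall u, inTb b u -> \sum_al lam al * (1 - w (u al)) + mu <= 0) ->
  inTba a b t -> inTb b u ->
  (forall al, al != a -> 0 <= (lam al - l) * kapf t u al) ->
  l * (n.+1%:R * (1 - w (t b))) + (lam a - l) * kapf t u a <= kap.
Proof.
move=> HX HY ht hu hpos.
have h1 : \sum_al lam al * kapf t u al <= kap.
  have := HX t ht; have := HY u hu.
  have -> : \sum_al lam al * kapf t u al =
     \sum_al lam al * (1 - w (u al)) + \sum_al lam al * (w (t al) - w (t b)).
    by rewrite -big_split; apply: eq_bigr => al _; rewrite /kapf mulrDr.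
  lra.
have h2 : \sum_al lam al * kapf t u al =
   l * \sum_al kapf t u al + \sum_al (lam al - l) * kapf t u al.
  by rewrite mulr_sumr -big_split; apply: eq_bigr => al _ /=; ring.
have h3 : (lam a - l) * kapf t u a <= \sum_al (lam al - l) * kapf t u al.
  rewrite (bigD1 a) //= lerDl; apply: sumr_ge0 => al; exact: hpos.
rewrite sum_kap in h2; lra.
Qed.

Lemma dual_bound (lam : 'I_n.+1 -> R) (mu kap : R) :
  (forall t, inTba a b t -> \sum_al lam al * (w (t al) - w (t b)) - mu <= kap) ->
  (forall u, inTb b u -> \sum_al lam al * (1 - w (u al)) + mu <= 0) ->
  forall l s, s != b -> lam s = l -> (forall al, al != b -> l <= lam al) ->
  forall i : 'I_n, (lam a - l) * (1 - w i + w i.+1) + l * (n.+1%:R * (1 - w i)) <= kap.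
Proof.
move=> HX HY l s hsb hs hmin i.
have Hba : a != b by rewrite eq_sym.
case: (eqVneq s a) => [esa|nsa].
  have [t [u [ht hu htb hrest]]] := pair2 i.
  suff H : l * (n.+1%:R * (1 - w i)) <= kap by rewrite -esa hs subrr mul0r add0r.
  have := pair_ineq HX HY ht hu (l := l).
  rewrite htb -esa hs subrr mul0r addr0.
  apply => al hal; case: (eqVneq al b) => [->|hb]; first by rewrite kap_b // mulr0.
  apply: mulr_ge0; first by rewrite subr_ge0 hmin.
  by apply: kap_ge0; apply: hrest => //; rewrite -esa.
have [t [u [ht hu htb hua hrest]]] := pair1 i nsa hsb.
have := pair_ineq HX HY ht hu (l := l).
have -> : kapf t u a = 1 - w i + w i.+1.
  by rewrite /kapf hua wn; move/eqP: ht => ->; rewrite htb; ring.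
rewrite htb addrC; apply => al hal; case: (eqVneq al b) => [->|hb]; first by rewrite kap_b // mulr0.
case: (eqVneq al s) => [->|hs']; first by rewrite hs subrr mul0r.
apply: mulr_ge0; first by rewrite subr_ge0 hmin.
by apply: kap_ge0; apply: hrest.
Qed.
Definition rowT := ('I_n.+1 + (bool + bool))%type.
Definition colT := ({perm 'I_n.+1} + {perm 'I_n.+1})%type.

Definition Amat (k : rowT) (j : colT) : R :=
  match k, j with
  | inl al, inl t => if inTba a b t then - (sigma w t b - sigma w t al) else 0
  | inl al, inr t => if inTb b t then 1 - sigma w t al else 0
  | inr (inl true), inl t => if inTba a b t then -1 else 0
  | inr (inl true), inr t => if inTb b t then 1 else 0
  | inr (inl false), inl t => if inTba a b t then 1 else 0
  | inr (inl false), inr t => if inTb b t then -1 else 0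
  | inr (inr _), inl t => if inTba a b t then -1 else 0
  | inr (inr _), inr t => 0
  end.

Definition bvec (Z : R) (k : rowT) : R :=
  match k with
  | inl al => score w N al - score w N b
  | inr (inl _) => 0
  | inr (inr _) => - Z
  end.

Lemma sum_if (T : finType) (P : pred T) (f g : T -> R) :
  \sum_t (if P t then f t else 0) * g t = \sum_(t | P t) f t * g t.
Proof. by rewrite [RHS]big_mkcond; apply: eq_bigr => t _; case: ifP; rewrite ?mul0r. Qed.

Lemma colx (Y : rowT -> R) t : inTba a b t ->
  \sum_k Y k * Amat k (inl t) =
  \sum_al Y (inl al) * (sigma w t al - sigma w t b) - (Y (inr (inl true)) - Y (inr (inl false)))
   - (Y (inr (inr true)) + Y (inr (inr false))).
Proof.
move=> ht; rewrite big_sumType /= big_sumType !big_bool /=.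
have -> : \sum_i Y (inl i) * (if inTba a b t then - (sigma w t b - sigma w t i) else 0) =
   \sum_al Y (inl al) * (sigma w t al - sigma w t b).
  by apply: eq_bigr => al _; rewrite ht opprB.
rewrite ht; ring.
Qed.

Lemma coly (Y : rowT -> R) u : inTb b u ->
  \sum_k Y k * Amat k (inr u) =
  \sum_al Y (inl al) * (1 - sigma w u al) + (Y (inr (inl true)) - Y (inr (inl false))).
Proof.
move=> hu; rewrite big_sumType /= big_sumType !big_bool /=.
have -> : \sum_i Y (inl i) * (if inTb b u then 1 - sigma w u i else 0) =
   \sum_al Y (inl al) * (1 - sigma w u al).
  by apply: eq_bigr => al _; rewrite hu.
rewrite hu; ring.
Qed.

Lemma rowsum (X : colT -> R) k :
  \sum_j Amat k j * X j =
  match k with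
  | inl al => \sum_(t | inTb b t) X (inr t) * (1 - sigma w t al)
              - \sum_(t | inTba a b t) X (inl t) * (sigma w t b - sigma w t al)
  | inr (inl true) => \sum_(t | inTb b t) X (inr t) - \sum_(t | inTba a b t) X (inl t)
  | inr (inl false) => \sum_(t | inTba a b t) X (inl t) - \sum_(t | inTb b t) X (inr t)
  | inr (inr _) => - \sum_(t | inTba a b t) X (inl t)
  end.
Proof.
rewrite big_sumType /=; case: k => [al|[[]|[]]] /=.
- rewrite !sum_if addrC; congr (_ + _); first by apply: eq_bigr => t _; rewrite mulrC.
  by rewrite -sumrN; apply: eq_bigr => t _; rewrite mulNr mulrC.
- rewrite !sum_if addrC; congr (_ + _); first by apply: eq_bigr => t _; rewrite mul1r.
  by rewrite -sumrN; apply: eq_bigr => t _; rewrite mulN1r.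
- rewrite !sum_if; congr (_ + _); first by apply: eq_bigr => t _; rewrite mul1r.
  by rewrite -sumrN; apply: eq_bigr => t _; rewrite mulN1r.
- rewrite sum_if; under [X in _ + X]eq_bigr do rewrite mul0r; rewrite big1_eq addr0.
  by rewrite -sumrN; apply: eq_bigr => t _; rewrite mulN1r.
- rewrite sum_if; under [X in _ + X]eq_bigr do rewrite mul0r; rewrite big1_eq addr0.
  by rewrite -sumrN; apply: eq_bigr => t _; rewrite mulN1r.
Qed.
Lemma dir2 (z : 'I_n -> R) : (forall al, al != a -> score w N al <= score w N b) ->
  LP2_feasible w N a b z -> (LP1_value w N a b <= (\sum_(i < n) z i)%:E)%E.
Proof.
move=> Hb [Hc He Hz].
have Hba : a != b by rewrite eq_sym.
case: (farkas_nn Amat (bvec (\sum_i z i))) => [[X [HX0 HXr]] | [Y [HY0 [HYc HYb]]]].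
  pose x t := X (inl t); pose y t := X (inr t).
  have Hf : LP1_feasible w N a b x y.
    split.
    - by move=> al hal; have := HXr (inl al); rewrite rowsum.
    - by have := HXr (inr (inl true)); have := HXr (inr (inl false)); rewrite !rowsum /=; lra.
    - by move=> t; apply: HX0.
    - by move=> t; apply: HX0.
  have Hcost : \sum_(t | inTba a b t) x t <= \sum_i z i.
    by have := HXr (inr (inr true)); rewrite rowsum /=; lra.
  apply: (@le_trans _ _ (\sum_(t | inTba a b t) x t)%:E); last by rewrite lee_fin.
  by apply: ereal_inf_lbound; exists (\sum_(t | inTba a b t) x t) => //; exists x, y.
exfalso.
pose lam al := Y (inl al).
pose mu := Y (inr (inl true)) - Y (inr (inl false)).
pose kap := Y (inr (inr true)) + Y (inr (inr false)).
have HX t : inTba a b t -> \sum_al lam al * (w (t al) - w (t b)) - mu <= kap.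
  by move=> ht; have := HYc (inl t); rewrite colx // /lam /mu /kap /sigma; lra.
have HY u : inTb b u -> \sum_al lam al * (1 - w (u al)) + mu <= 0.
  by move=> hu; have := HYc (inr u); rewrite coly // /lam /mu /sigma; lra.
case: (@arg_minP _ _ _ a [pred s | s != b] lam Hba) => s hsb hmin.
have Hdb := dual_bound HX HY hsb (erefl (lam s)) hmin.
pose r al := score w N al - score w N b.
have Hbnd : \sum_al lam al * r al <= (lam a - lam s) * r a + lam s * \sum_al r al.
  have -> : \sum_al lam al * r al = lam s * \sum_al r al + \sum_al (lam al - lam s) * r al.
    by rewrite mulr_sumr -big_split; apply: eq_bigr => al _ /=; ring.
  rewrite [\sum_al (lam al - lam s) * r al](bigD1 a) //=.
  have : \sum_(al | al != a) (lam al - lam s) * r al <= 0.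
    apply: sumr_le0 => al hal; case: (eqVneq al b) => [->|hb].
      by rewrite /r subrr mulr0.
    apply: mulr_ge0_le0; first by rewrite subr_ge0 hmin.
    by rewrite /r subr_le0 Hb.
  lra.
have Hsr : \sum_al r al = (nat_total N)%:R * S - n.+1%:R * score w N b.
  by rewrite /r sumrB sum_score sumr_const card_ord [n.+1%:R * _]mulr_natl.
have lam0 : 0 <= lam s by apply: HY0.
have las : 0 <= lam a - lam s by rewrite subr_ge0 hmin.
set cz := \sum_(i < n) (1 - w i + w i.+1) * z i in Hc.
set ez := \sum_(i < n) (1 - w i) * z i in He.
have hm : 0 < n.+1%:R :> R by rewrite ltr0n.
have He' : (nat_total N)%:R * S - n.+1%:R * score w N b <= n.+1%:R * ez.
  move: He; rewrite wbarE.
  have -> : (nat_total N)%:R * (S / n.+1%:R) - score w N b =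
     ((nat_total N)%:R * S - n.+1%:R * score w N b) / n.+1%:R by field; rewrite gt_eqF.
  by rewrite ler_pdivrMr // [ez * _]mulrC.
have h1 : (lam a - lam s) * r a <= (lam a - lam s) * cz by apply: ler_wpM2l.
have h2 : lam s * \sum_al r al <= lam s * (n.+1%:R * ez) by rewrite Hsr; apply: ler_wpM2l.
have h3 : (lam a - lam s) * cz + lam s * (n.+1%:R * ez) <= kap * \sum_i z i.
  have -> : (lam a - lam s) * cz + lam s * (n.+1%:R * ez) =
     \sum_(i < n) z i * ((lam a - lam s) * (1 - w i + w i.+1) + lam s * (n.+1%:R * (1 - w i))).
    rewrite /cz /ez !mulr_sumr -big_split; apply: eq_bigr => i _ /=; ring.
  rewrite mulr_sumr; apply: ler_sum => i _; rewrite [kap * _]mulrC; apply: ler_wpM2l => //; exact: Hdb.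
have Hyb : \sum_k Y k * bvec (\sum_i z i) k = \sum_al lam al * r al - kap * \sum_i z i.
  rewrite big_sumType /= big_sumType !big_bool /=; rewrite /kap; ring.
move: HYb; rewrite Hyb; lra.
Qed.
Lemma le21 : (LP2_value w N a b <= LP1_value w N a b)%E.
Proof.
apply: le_ereal_inf_tmp => _ [r [x [y [Hf ->]]] <-].
have [H2 Hs] := dir1 Hf.
apply: ereal_inf_lbound; exists (\sum_(i < n) zof x i); last by rewrite Hs.
by exists (zof x).
Qed.

Lemma le12 : (forall al, al != a -> score w N al <= score w N b) ->
  (LP1_value w N a b <= LP2_value w N a b)%E.
Proof.
move=> Hb; apply: le_ereal_inf_tmp => _ [r [z [Hz ->]] <-].
exact: dir2.
Qed.
End Main.

Unset Implicit Arguments.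
Theorem corollary10 (R : realType) (m : nat) (w : nat -> R)
    (N : {perm 'I_m} -> nat) (a b : 'I_m) :
  (3 <= m)%N ->
  wvalid m w ->
  (forall alpha : 'I_m, alpha != a -> score w N alpha < score w N a) ->
  b != a ->
  (forall alpha : 'I_m, alpha != a -> score w N alpha <= score w N b) ->
  LP1_value w N a b = LP2_value w N a b.
Proof.
case: m N a b => [|n] N a b hm Hw _ Hab Hb; first by [].
apply/le_anti/andP; split; first exact: le12.
exact: le21.
Qed.
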